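(* Let $x\in\mathcal{T}$ and let $x^*$ be its condensed form. Then the equivalence class of $x$ under warping identification is $$[x] := \{y\in\mathcal{T} : \delta(x,y)=0\} = \{y\in\mathcal{T} : y \succ x^*\}.$$
   Context: A time series of length $n\ge1$ is a finite real sequence $x=(x_1,\dots,x_n)$; $\mathcal{T}$ is the set of all time series of finite length. For $m,n\in\mathbb{N}$, a warping path of order $m\times n$ is a sequence $p=(p_1,\dots,p_\ell)$ of points in $[m]\times[n]$ ($[n]=\{1,\dots,n\}$) with $p_1=(1,1)$, $p_\ell=(m,n)$, $p_{l+1}-p_l\in\{(1,0),(0,1),(1,1)\}$; $\mathcal{P}_{m,n}$ is the set of these. The dtw-distance of $x$ (length $m$) and $y$ (length $n$) is $\delta(x,y)=\min_{p\in\mathcal{P}_{m,n}}\big(\sum_{(i,j)\in p}(x_i-y_j)^2\big)^{1/2}$. A time series $x'$ is an expansion of $x=(x_1,\dots,x_n)$, written $x'\succ x$ (equivalently $x\prec x'$, $x$ is a compression of $x'$), if there are integers $\alpha_1,\dots,\alpha_n\ge1$ such that $x'=(\underbrace{x_1,\dots,x_1}_{\alpha_1},\dots,\underbrace{x_n,\dots,x_n}_{\alpha_n})$. A time series is irreducible if no two consecutive elements are equal (equivalently, it is not an expansion of a shorter time series). The condensed form $x^*$ of $x$ is the (unique) irreducible time series with $x\succ x^*$, obtained by collapsing each maximal run of consecutive equal values to a single element. *)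

(* Defs.v *)
From Stdlib Require Import Reals List ClassicalEpsilon.
Open Scope R_scope.
Import ListNotations.

(* A time series is a finite, non-empty real sequence; we use lists with
   the side condition [x <> []] (1-indexed entries x_i = nth (i-1) x 0). *)
Definition ts := list R.
Definition is_ts (x : ts) : Prop := x <> [].

Definition at1 (x : ts) (i : nat) : R := nth (i - 1) x 0.

Definition wstep (a b : nat * nat) : Prop :=
  (fst b = S (fst a) /\ snd b = snd a) \/
  (fst b = fst a /\ snd b = S (snd a)) \/
  (fst b = S (fst a) /\ snd b = S (snd a)).

Fixpoint steps_ok (p : list (nat * nat)) : Prop :=
  match p with
  | a :: ((b :: _) as q) => wstep a b /\ steps_ok q
  | _ => True
  end.

Definition warping_path (m n : nat) (p : list (nat * nat)) : Prop :=
  p <> [] /\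
  hd (0%nat, 0%nat) p = (1%nat, 1%nat) /\
  last p (0%nat, 0%nat) = (m, n) /\
  steps_ok p /\
  Forall (fun ij => (1 <= fst ij <= m)%nat /\ (1 <= snd ij <= n)%nat) p.

Definition path_cost (x y : ts) (p : list (nat * nat)) : R :=
  fold_right (fun ij acc => (at1 x (fst ij) - at1 y (snd ij))^2 + acc) 0 p.

Definition is_min_cost (x y : ts) (c : R) : Prop :=
  (exists p, warping_path (length x) (length y) p /\ path_cost x y p = c) /\
  (forall p, warping_path (length x) (length y) p -> c <= path_cost x y p).

(* dtw-distance: square root of the minimal cost (the minimum exists since
   P_{m,n} is finite and nonempty). *)
Definition dtw (x y : ts) : R :=
  sqrt (epsilon (inhabits 0) (fun c => is_min_cost x y c)).

Definition expansion (x' x : ts) : Prop :=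
  exists alpha : list nat,
    length alpha = length x /\ Forall (fun a => (1 <= a)%nat) alpha /\
    x' = flat_map (fun pa => repeat (fst pa) (snd pa)) (combine x alpha).

Fixpoint irreducible (x : ts) : Prop :=
  match x with
  | a :: ((b :: _) as q) => a <> b /\ irreducible q
  | _ => True
  end.

(* condensed form: collapse maximal runs of equal consecutive values *)
Fixpoint condense (x : ts) : ts :=
  match x with
  | [] => []
  | a :: q =>
      match condense q with
      | b :: r => if Req_EM_T a b then b :: r else a :: b :: r
      | [] => [a]
      end
  end.

(* Main.v *)
Require Import Defs.
From Stdlib Require Import Reals List.
From Stdlib Require Import Lia Lra Psatz Classical ClassicalEpsilon Arith.
Open Scope R_scope.
Import ListNotations.

Lemma cost_nonneg x y p : 0 <= path_cost x y p.
Proof. induction p as [|[i j] p IH]; simpl; [lra|].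
  pose proof (pow2_ge_0 (at1 x i - at1 y j)). lra. Qed.

Definition zeroP x y p := Forall (fun ij : nat*nat => at1 x (fst ij) = at1 y (snd ij)) p.

Lemma cost_zero x y p : path_cost x y p = 0 <-> zeroP x y p.
Proof.
  unfold zeroP; induction p as [|[i j] p IH]; simpl.
  - split; auto.
  - pose proof (cost_nonneg x y p). pose proof (pow2_ge_0 (at1 x i - at1 y j)).
    split.
    + intros Hc. assert (Hs: (at1 x i - at1 y j)^2 = 0) by lra.
      constructor.
      * simpl. nra.
      * apply IH; lra.
    + intros Hc; inversion Hc as [|? ? Hh Ht]; subst. simpl in Hh. rewrite Hh.
      apply IH in Ht. rewrite Ht. ring.
Qed.

Definition shift (dx dy : nat) (ij : nat*nat) : nat*nat := (fst ij + dx, snd ij + dy)%nat.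
Definition unshift (dx dy : nat) (ij : nat*nat) : nat*nat := (fst ij - dx, snd ij - dy)%nat.

Lemma steps_cons a b q : steps_ok (a::b::q) <-> wstep a b /\ steps_ok (b::q).
Proof. reflexivity. Qed.

Lemma steps_ok_map (Q : nat*nat -> Prop) f p :
  Forall Q p -> (forall a b, Q a -> Q b -> wstep a b -> wstep (f a) (f b)) ->
  steps_ok p -> steps_ok (map f p).
Proof.
  intros HQ Hf; revert HQ; induction p as [|a p IH]; intros HQ; simpl; auto.
  destruct p as [|b p]; simpl; auto.
  intros [Hab Hs]. inversion HQ as [|? ? Ha HQ']; subst.
  inversion HQ' as [|? ? Hb HQ'']; subst. split.
  - apply Hf; auto.
  - apply IH; auto.
Qed.

Lemma steps_mono h r : steps_ok (h::r) ->
  Forall (fun b : nat*nat => fst h <= fst b /\ snd h <= snd b)%nat r.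
Proof.
  revert h; induction r as [|b r IH]; intros h H; auto.
  apply steps_cons in H. destruct H as [Hw Hs]. assert (Hb := IH b Hs).
  constructor.
  - unfold wstep in Hw; lia.
  - eapply Forall_impl; [|exact Hb]. intros c Hc. cbv beta in *. unfold wstep in Hw; lia.
Qed.

Lemma last_cons2 {A} (a b : A) l d : last (a::b::l) d = last (b::l) d.
Proof. reflexivity. Qed.

Lemma last_cons_ne {A} (a : A) l d : l <> [] -> last (a::l) d = last l d.
Proof. destruct l; [congruence|reflexivity]. Qed.

Lemma last_map' {A B} (f : A -> B) l d d' : l <> [] -> last (map f l) d' = f (last l d).
Proof.
  induction l as [|a l IH]; intros H; [congruence|].
  destruct l as [|b l]; [reflexivity|].
  cbn [map]. rewrite !last_cons2. apply IH. discriminate.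
Qed.

Lemma steps_len h r d : steps_ok (h::r) ->
  (fst h + snd h + length r <= fst (last (h::r) d) + snd (last (h::r) d))%nat.
Proof.
  revert h; induction r as [|b r IH]; intros h H.
  - simpl. lia.
  - apply steps_cons in H. destruct H as [Hw Hs]. specialize (IH b Hs).
    rewrite last_cons2. cbn [length]. unfold wstep in Hw. lia.
Qed.

Lemma wp_len m n p : warping_path m n p -> (length p <= m + n)%nat.
Proof.
  intros [Hne [Hhd [Hl [Hs Hr]]]]. destruct p as [|h r]; [congruence|].
  simpl in Hhd. subst h. pose proof (steps_len _ _ (0,0)%nat Hs) as H.
  rewrite Hl in H. simpl in H |- *. lia.
Qed.

Fixpoint words (A : list (nat*nat)) (k : nat) : list (list (nat*nat)) :=
  match k with
  | O => [[]]
  | S k => [] :: flat_map (fun w => map (fun a => a :: w) A) (words A k)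
  end.

Lemma words_in A k w : Forall (fun a => In a A) w -> (length w <= k)%nat -> In w (words A k).
Proof.
  revert w; induction k as [|k IH]; intros w Hw Hl.
  - destruct w; simpl in *; [auto | lia].
  - destruct w as [|a w]; simpl; [auto|]. right. apply in_flat_map. exists w.
    inversion Hw; subst. split.
    + apply IH; auto. simpl in Hl; lia.
    + apply (in_map (fun a0 => a0 :: w)); auto.
Qed.

Lemma list_min {T} (P : T -> Prop) (f : T -> R) (L : list T) :
  (exists p, In p L /\ P p) -> exists p, P p /\ forall q, In q L -> P q -> f p <= f q.
Proof.
  induction L as [|a L IH]; intros [p [Hp HP]]; [destruct Hp|].
  destruct (classic (exists p, In p L /\ P p)) as [He|Hn].
  - destruct (IH He) as [p0 [HP0 Hm]].
    destruct (classic (P a)) as [Ha|Ha].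
    + destruct (Rle_lt_dec (f a) (f p0)).
      * exists a. split; auto. intros q [<-|Hq] Hq'; [lra|]. specialize (Hm q Hq Hq'); lra.
      * exists p0. split; auto. intros q [<-|Hq] Hq'; [lra|auto].
    + exists p0. split; auto. intros q [<-|Hq] Hq'; [contradiction|auto].
  - destruct Hp as [<-|Hp]; [|exfalso; apply Hn; eauto].
    exists a. split; auto. intros q [<-|Hq] Hq'; [lra| exfalso; apply Hn; eauto].
Qed.

Lemma wp_base : warping_path 1 1 [(1,1)%nat].
Proof.
  split; [discriminate|]. split; [reflexivity|]. split; [reflexivity|].
  split; [exact I|]. constructor; [simpl; lia|constructor].
Qed.

Lemma wp_ext dx dy m n p : (dx <= 1)%nat -> (dy <= 1)%nat -> (1 <= dx + dy)%nat ->
  warping_path m n p ->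
  warping_path (m+dx) (n+dy) ((1,1)%nat :: map (shift dx dy) p).
Proof.
  intros H1 H2 H3 [Hne [Hhd [Hl [Hs Hr]]]].
  destruct p as [|h r]; [congruence|]. simpl in Hhd; subst h.
  split; [discriminate|]. split; [reflexivity|]. split.
  - rewrite last_cons_ne by (simpl; discriminate).
    rewrite (last_map' _ _ (0,0)%nat) by discriminate. rewrite Hl. reflexivity.
  - split.
    + assert (Hs' : steps_ok (map (shift dx dy) ((1,1)%nat::r))).
      { apply steps_ok_map with (Q := fun _ => True); auto.
        - apply Forall_forall; auto.
        - intros [a1 a2] [b1 b2] _ _. unfold wstep, shift; simpl; lia. }
      cbn [map] in *. apply steps_cons. split; [|exact Hs'].
      unfold wstep, shift; simpl; lia.
    + inversion Hr as [|? ? H11 Hr']; subst. simpl in H11.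
      constructor; [simpl; lia|].
      apply Forall_map. eapply Forall_impl; [|exact Hr].
      intros [a1 a2]; unfold shift; simpl; lia.
Qed.

Lemma wp_exists m n : exists p, warping_path (S m) (S n) p.
Proof.
  induction m as [|m IHm].
  - induction n as [|n IHn].
    + exists [(1,1)%nat]. apply wp_base.
    + destruct IHn as [p Hp]. eexists.
      replace (S (S n)) with (S n + 1)%nat by lia. replace 1%nat with (1+0)%nat at 1 by lia.
      apply wp_ext; [lia|lia|lia|exact Hp].
  - destruct IHm as [p Hp]. eexists.
    replace (S (S m)) with (S m + 1)%nat by lia. replace (S n) with (S n + 0)%nat by lia.
    apply wp_ext; [lia|lia|lia|exact Hp].
Qed.

Lemma wp_dec m n h r : warping_path m n ((1,1)%nat :: h :: r) ->
  exists dx dy, (dx <= 1 /\ dy <= 1 /\ 1 <= dx + dy /\ 1 + dx <= m /\ 1 + dy <= n)%nat /\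
   Forall (fun b : nat*nat => 1 + dx <= fst b /\ 1 + dy <= snd b)%nat (h::r) /\
   warping_path (m - dx) (n - dy) (map (unshift dx dy) (h::r)).
Proof.
  intros [Hne [Hhd [Hl [Hs Hr]]]].
  apply steps_cons in Hs. destruct Hs as [Hw Hs].
  destruct h as [i j]. unfold wstep in Hw; simpl in Hw.
  exists (i-1)%nat, (j-1)%nat.
  pose proof (steps_mono _ _ Hs) as Hmono. simpl in Hmono.
  inversion Hr as [|? ? _ Hr1]; subst. inversion Hr1 as [|? ? Hij Hr2]; subst.
  simpl in Hij.
  assert (HQ : Forall (fun b : nat*nat => 1 + (i-1) <= fst b /\ 1 + (j-1) <= snd b)%nat ((i,j)::r)).
  { constructor; [simpl; lia|]. eapply Forall_impl; [|exact Hmono]. intros b Hb; cbv beta in *; simpl in *; lia. }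
  split; [lia|]. split; [exact HQ|].
  split; [discriminate|]. split.
  - unfold unshift; simpl. f_equal; lia.
  - split.
    + rewrite (last_map' _ _ (0,0)%nat) by discriminate.
      rewrite last_cons2 in Hl. rewrite Hl. reflexivity.
    + split.
      * apply steps_ok_map with (Q := fun b : nat*nat => (1 + (i-1) <= fst b /\ 1 + (j-1) <= snd b)%nat); auto.
        intros [a1 a2] [b1 b2] Ha Hb. unfold wstep, unshift; simpl in *; lia.
      * apply Forall_map. pose proof (Forall_and HQ Hr1) as HH.
        eapply Forall_impl; [|exact HH]. intros [a1 a2]; unfold unshift; simpl; lia.
Qed.

Lemma at1_skip x dx i : (1 + dx <= i)%nat -> at1 x i = at1 (skipn dx x) (i - dx).
Proof. intros H. unfold at1. rewrite nth_skipn. f_equal. lia. Qed.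

Inductive W : ts -> ts -> Prop :=
| W_one a : W [a] [a]
| W_st dx dy a x y : (dx <= 1)%nat -> (dy <= 1)%nat -> (1 <= dx+dy)%nat ->
    W (skipn dx (a::x)) (skipn dy (a::y)) -> W (a::x) (a::y).

Lemma W_path x y : W x y -> exists p, warping_path (length x) (length y) p /\ zeroP x y p.
Proof.
  induction 1 as [a|dx dy a x y H1 H2 H3 HW [p [Hp Hz]]].
  - exists [(1,1)%nat]. split; [apply wp_base|]. constructor; [reflexivity|constructor].
  - rewrite !length_skipn in Hp.
    pose proof (wp_ext _ _ _ _ _ H1 H2 H3 Hp) as Hp'.
    replace (length (a::x) - dx + dx)%nat with (length (a::x)) in Hp' by (cbn [length]; lia).
    replace (length (a::y) - dy + dy)%nat with (length (a::y)) in Hp' by (cbn [length]; lia).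
    eexists; split; [exact Hp'|].
    constructor; [reflexivity|].
    destruct Hp as [_ [_ [_ [_ Hr]]]].
    apply Forall_map. pose proof (Forall_and Hr Hz) as HH.
    eapply Forall_impl; [|exact HH]. intros [i j]; simpl; intros [[Hi Hj] He].
    rewrite (at1_skip _ dx) by lia. rewrite (at1_skip (a::y) dy) by lia.
    replace (i + dx - dx)%nat with i by lia. replace (j + dy - dy)%nat with j by lia. exact He.
Qed.

Lemma path_W : forall k p x y, (length p <= k)%nat ->
  warping_path (length x) (length y) p -> zeroP x y p -> W x y.
Proof.
  induction k as [|k IH]; intros p x y Hk Hp Hz.
  - destruct Hp as [Hne _]. destruct p; [congruence|simpl in Hk; lia].
  - pose proof Hp as [Hne [Hhd [Hl [Hs Hr]]]].
    destruct p as [|h0 q]; [congruence|]. simpl in Hhd; subst h0.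
    inversion Hr as [|? ? H11 _]; subst. simpl in H11.
    destruct x as [|a x']; [simpl in H11; lia|]. destruct y as [|b y']; [simpl in H11; lia|].
    inversion Hz as [|? ? Hab Hzq]; subst. unfold at1 in Hab; simpl in Hab. subst b.
    destruct q as [|h r].
    + simpl in Hl. injection Hl as E1 E2.
      destruct x'; [|simpl in E1; lia]. destruct y'; [|simpl in E2; lia]. constructor.
    + destruct (wp_dec _ _ _ _ Hp) as [dx [dy [Hb [HQ Hp']]]].
      apply (W_st dx dy); try lia.
      apply (IH (map (unshift dx dy) (h::r))).
      * rewrite length_map. simpl in Hk |- *. lia.
      * rewrite !length_skipn. exact Hp'.
      * unfold zeroP. apply Forall_map. pose proof (Forall_and HQ Hzq) as HH.
        eapply Forall_impl; [|exact HH]. intros [i j]; simpl; intros [[Hi Hj] He].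
        rewrite <- (at1_skip _ dx) by lia. rewrite <- (at1_skip _ dy) by lia. exact He.
Qed.

Definition cons' (a : R) (l : ts) : ts :=
  match l with [] => [a] | b :: r => if Req_EM_T a b then b :: r else a :: b :: r end.

Lemma condense_cons a q : condense (a::q) = cons' a (condense q).
Proof. reflexivity. Qed.

Lemma cons'_hd a l : exists r, cons' a l = a :: r.
Proof.
  destruct l as [|b r]; simpl; [eauto|].
  destruct (Req_EM_T a b); [subst; eauto|eauto].
Qed.

Lemma cons'_eq a r : cons' a (a::r) = a :: r.
Proof. simpl. destruct (Req_EM_T a a); congruence. Qed.

Lemma cons'_ne a c r : c <> a -> cons' a (c::r) = a :: c :: r.
Proof. intros H. simpl. destruct (Req_EM_T a c); [congruence|reflexivity]. Qed.

Lemma cons'_idem a l : cons' a (cons' a l) = cons' a l.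
Proof. destruct (cons'_hd a l) as [r Hr]. rewrite Hr. apply cons'_eq. Qed.

Lemma W_condense x y : W x y -> condense x = condense y.
Proof.
  induction 1 as [a|dx dy a x y H1 H2 H3 HW IH]; [reflexivity|].
  rewrite !condense_cons.
  destruct dx as [|[|dx]]; [|cbn [skipn] in IH|lia]; destruct dy as [|[|dy]]; try lia; cbn [skipn] in IH.
  - rewrite <- IH, condense_cons, cons'_idem. reflexivity.
  - rewrite IH, condense_cons, cons'_idem. reflexivity.
  - rewrite IH. reflexivity.
Qed.

Lemma condense_W : forall k x y, (length x + length y <= k)%nat -> x <> [] -> y <> [] ->
  condense x = condense y -> W x y.
Proof.
  induction k as [|k IH]; intros x y Hk Hx Hy He.
  - destruct x; [congruence|simpl in Hk; lia].
  - destruct x as [|a x']; [congruence|]. destruct y as [|b y']; [congruence|].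
    rewrite !condense_cons in He.
    destruct (cons'_hd a (condense x')) as [ra Ha]. destruct (cons'_hd b (condense y')) as [rb Hb].
    assert (a = b) by congruence. subst b.
    destruct x' as [|c x''].
    + destruct y' as [|e y''].
      * constructor.
      * destruct (cons'_hd e (condense y'')) as [re He']. rewrite condense_cons, He' in He.
        destruct (Req_EM_T e a) as [<-|Hne].
        -- apply (W_st 0 1); try lia. simpl. apply IH; cbn [length] in *; try lia; try discriminate.
           rewrite (condense_cons e y''), He'. rewrite cons'_eq in He. exact He.
        -- rewrite cons'_ne in He by auto. simpl in He. congruence.
    + destruct (cons'_hd c (condense x'')) as [rc Hc]. rewrite condense_cons, Hc in He.
      destruct (Req_EM_T c a) as [<-|Hnc].
      * apply (W_st 1 0); try lia. simpl. apply IH; cbn [length skipn] in *; try lia; try discriminate.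
        rewrite !condense_cons, Hc, <- He, cons'_eq. reflexivity.
      * rewrite cons'_ne in He by auto.
        destruct y' as [|e y''].
        -- simpl in He. congruence.
        -- destruct (cons'_hd e (condense y'')) as [re He']. rewrite condense_cons, He' in He.
           destruct (Req_EM_T e a) as [<-|Hne].
           ++ apply (W_st 0 1); try lia. simpl. apply IH; cbn [length skipn] in *; try lia; try discriminate.
              rewrite !condense_cons, Hc, He', cons'_ne by auto. rewrite He, cons'_eq. reflexivity.
           ++ rewrite cons'_ne in He by auto.
              apply (W_st 1 1); try lia. simpl. apply IH; cbn [length skipn] in *; try lia; try discriminate.
              rewrite !condense_cons, Hc, He'. congruence.
Qed.

Lemma expansion_condense y : expansion y (condense y).
Proof.
  induction y as [|a q IH].
  - exists []. simpl. split; auto.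
  - destruct IH as [al [Hlen [Hal Hq]]]. rewrite condense_cons.
    destruct (condense q) as [|b r] eqn:Ec.
    + simpl in Hq. subst q. exists [1%nat]. simpl. split; auto.
    + destruct al as [|k al]; [simpl in Hlen; lia|].
      pose proof (Forall_inv Hal) as Hk; pose proof (Forall_inv_tail Hal) as Hal'.
      simpl in Hq. simpl.
      destruct (Req_EM_T a b) as [<-|Hab].
      * exists (S k :: al). simpl. split; [simpl in *; lia|]. split; [constructor; auto|].
        rewrite Hq. reflexivity.
      * exists (1%nat :: k :: al). simpl. split; [simpl in *; lia|].
        split; [constructor; auto|]. rewrite Hq. reflexivity.
Qed.

Lemma condense_rep c k w : condense (repeat c (S k) ++ w) = cons' c (condense w).
Proof.
  induction k as [|k IH]; [reflexivity|].
  change (repeat c (S (S k)) ++ w) with (c :: (repeat c (S k) ++ w)).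
  rewrite condense_cons, IH, cons'_idem. reflexivity.
Qed.

Lemma expansion_irr z : forall y, expansion y z -> irreducible z -> z <> [] -> condense y = z.
Proof.
  induction z as [|c z' IH]; intros y [al [Hlen [Hal Hy]]] Hirr Hne; [congruence|].
  destruct al as [|k al]; [simpl in Hlen; lia|].
  inversion Hal as [|? ? Hk Hal']; subst. simpl.
  destruct k as [|k]; [lia|]. rewrite condense_rep.
  destruct z' as [|d z''].
  - destruct al; [|simpl in Hlen; lia]. reflexivity.
  - simpl in Hirr. destruct Hirr as [Hcd Hirr].
    rewrite (IH (flat_map (fun pa => repeat (fst pa) (snd pa)) (combine (d :: z'') al))).
    + apply cons'_ne. auto.
    + exists al. simpl in Hlen. split; [simpl; lia|]. split; auto.
    + exact Hirr.
    + discriminate.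
Qed.

Lemma irr_cons' a l : irreducible l -> irreducible (cons' a l).
Proof.
  destruct l as [|b r]; simpl; auto. intros H.
  destruct (Req_EM_T a b); [exact H|]. split; auto.
Qed.

Lemma irr_condense x : irreducible (condense x).
Proof. induction x as [|a q IH]; [exact I|]. rewrite condense_cons. apply irr_cons'; auto. Qed.

Lemma condense_ne x : x <> [] -> condense x <> [].
Proof. destruct x as [|a q]; [congruence|]. rewrite condense_cons.
  destruct (cons'_hd a (condense q)) as [r ->]. discriminate. Qed.

Lemma min_exists x y : x <> [] -> y <> [] -> exists c, is_min_cost x y c.
Proof.
  intros hx hy.
  destruct (length x) as [|m] eqn:Em; [destruct x; simpl in Em; congruence|].
  destruct (length y) as [|n] eqn:En; [destruct y; simpl in En; congruence|].
  set (A := list_prod (seq 1 (S m)) (seq 1 (S n))).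
  destruct (list_min (warping_path (S m) (S n)) (path_cost x y) (words A (S m + S n)))
    as [p0 [Hp0 Hmin]].
  - destruct (wp_exists m n) as [p Hp]. exists p. split; auto.
    apply words_in; [|apply wp_len; auto].
    destruct Hp as [_ [_ [_ [_ Hr]]]]. eapply Forall_impl; [|exact Hr].
    intros [i j] [Hi Hj]. apply in_prod; apply in_seq; simpl in *; lia.
  - exists (path_cost x y p0). unfold is_min_cost; rewrite Em, En. split; [eauto|].
    intros p Hp. apply Hmin; auto.
    apply words_in; [|apply wp_len; auto].
    destruct Hp as [_ [_ [_ [_ Hr]]]]. eapply Forall_impl; [|exact Hr].
    intros [i j] [Hi Hj]. apply in_prod; apply in_seq; simpl in *; lia.
Qed.

Lemma dtw_zero x y : x <> [] -> y <> [] ->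
  (dtw x y = 0 <-> exists p, warping_path (length x) (length y) p /\ zeroP x y p).
Proof.
  intros hx hy. unfold dtw.
  destruct (min_exists x y hx hy) as [c Hc].
  pose proof (epsilon_spec (inhabits 0) (fun c => is_min_cost x y c) (ex_intro _ c Hc)) as Hs.
  cbv beta in Hs.
  set (e := epsilon _ _) in *.
  destruct Hs as [[p0 [Hp0 Hc0]] Hmin].
  split.
  - intro H. apply sqrt_eq_0 in H; [|rewrite <- Hc0; apply cost_nonneg].
    exists p0. split; auto. apply cost_zero. lra.
  - intros [p [Hp Hz]]. apply cost_zero in Hz. specialize (Hmin p Hp).
    assert (e = 0) as -> by (pose proof (cost_nonneg x y p0); lra). apply sqrt_0.
Qed.

Theorem proposition2 (x : ts) (hx : is_ts x) :
  forall y : ts, is_ts y -> (dtw x y = 0 <-> expansion y (condense x)).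
Proof.
  intros y hy. unfold is_ts in *. rewrite (dtw_zero x y hx hy). split.
  - intros [p [Hp Hz]].
    pose proof (path_W (length p) p x y (le_n _) Hp Hz) as HW.
    rewrite (W_condense _ _ HW). apply expansion_condense.
  - intros He. apply expansion_irr in He; [|apply irr_condense|apply condense_ne; auto].
    apply W_path. apply (condense_W (length x + length y)); auto.
Qed.
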